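(* Let $f=p_1\cdots p_d\in\mathbb{C}[z_1,\dots,z_n]$ be a product of $d\ge 1$ homogeneous linear polynomials $p_1,\dots,p_d$. If $\mathcal I(f)\neq\mathbb{R}^n$, then the number of distinct hyperbolicity cones of $f$ is positive and at most $2^d$ if $1\le d\le n$, and at most $2\sum_{k=0}^{n-1}\binom{d-1}{k}$ if $d>n$.
   Context: For $f\in\mathbb{C}[z_1,\dots,z_n]$, $\mathcal{V}(f)\subseteq\mathbb{C}^n$ denotes its complex zero set and the imaginary projection of $f$ is $\mathcal{I}(f)=\{\Im(\mathbf z):\mathbf z\in\mathcal V(f)\}\subseteq\mathbb{R}^n$, where $\Im$ is taken componentwise. A homogeneous polynomial $f\in\mathbb{C}[z_1,\dots,z_n]$ is hyperbolic in direction $\mathbf e\in\mathbb{R}^n$ if $f(\mathbf e)\neq 0$ and for every $\mathbf x\in\mathbb{R}^n$ the univariate polynomial $t\mapsto f(\mathbf x+t\mathbf e)$ has only real roots. In that case the hyperbolicity cone of $f$ with respect to $\mathbf e$ is $C(\mathbf e)=\{\mathbf x\in\mathbb{R}^n: f(\mathbf x+t\mathbf e)=0\Rightarrow t<0\}$. The hyperbolicity cones of $f$ are the sets $C(\mathbf e)$ for all directions $\mathbf e$ in which $f$ is hyperbolic. *)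

(* Defs.v *)
(* The complex numbers are modelled by an arbitrary
   numClosedFieldType C (e.g. the complex numbers); "real" means x \is Num.real. *)
From HB Require Import structures.
From mathcomp Require Import all_boot all_order all_algebra.
Set Implicit Arguments. Unset Strict Implicit. Unset Printing Implicit Defensive.
Import Order.TTheory GRing.Theory Num.Theory.
Local Open Scope ring_scope.

Definition real_vec (C : numClosedFieldType) (n : nat) (x : 'I_n -> C) : Prop :=
  forall j, x j \is Num.real.

Definition linprod (C : numClosedFieldType) (n d : nat) (a : 'I_d -> 'I_n -> C)
  (z : 'I_n -> C) : C := \prod_(i < d) \sum_(j < n) a i j * z j.

Definition imag_proj_full (C : numClosedFieldType) (n : nat) (f : ('I_n -> C) -> C) : Prop :=
  forall y : 'I_n -> C, real_vec y ->
    exists z : 'I_n -> C, f z = 0 /\ forall j, 'Im (z j) = y j.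

Definition hyperbolic (C : numClosedFieldType) (n : nat) (f : ('I_n -> C) -> C)
  (e : 'I_n -> C) : Prop :=
  real_vec e /\ f e != 0 /\
  forall x : 'I_n -> C, real_vec x ->
    forall t : C, f (fun j => x j + t * e j) = 0 -> t \is Num.real.

Definition hcone (C : numClosedFieldType) (n : nat) (f : ('I_n -> C) -> C)
  (e x : 'I_n -> C) : Prop :=
  real_vec x /\ forall t : C, f (fun j => x j + t * e j) = 0 -> t < 0.

Definition hcone_count (C : numClosedFieldType) (n : nat) (f : ('I_n -> C) -> C)
  (N : nat) : Prop :=
  exists L : seq ('I_n -> C),
    size L = N /\
    (forall i, (i < size L)%N -> hyperbolic f (nth (fun _ => 0) L i)) /\
    (forall i k, (i < size L)%N -> (k < size L)%N -> i <> k ->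
       ~ (forall x, hcone f (nth (fun _ => 0) L i) x <-> hcone f (nth (fun _ => 0) L k) x)) /\
    (forall e, hyperbolic f e -> exists i, (i < size L)%N /\
       (forall x, hcone f e x <-> hcone f (nth (fun _ => 0) L i) x)).

(* Main.v *)
From HB Require Import structures.
From mathcomp Require Import all_boot all_order all_algebra.
From mathcomp Require Import boolp.
From mathcomp Require Import ring zify.
Require Import Defs.
Import Order.TTheory GRing.Theory Num.Theory.
Local Open Scope ring_scope.
Set Implicit Arguments. Unset Strict Implicit.
Section Count.
Variable C : numClosedFieldType.

Definition dot k (c y : 'I_k -> C) : C := \sum_(j < k) c j * y j.

Definition realized m k (c : 'I_m -> 'I_k -> C) (s : {ffun 'I_m -> bool}) : Prop :=
  exists y : 'I_k -> C, (forall j, y j \is Num.real) /\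
    forall i, dot (c i) y != 0 /\ s i = (0 < dot (c i) y).

Definition Sg m k (c : 'I_m -> 'I_k -> C) := [set s | `[< realized c s >]].

Lemma dot_real k (c y : 'I_k -> C) : (forall j, c j \is Num.real) ->
  (forall j, y j \is Num.real) -> dot c y \is Num.real.
Proof. by move=> cr yr; apply: rpred_sum => j _; apply: rpredM. Qed.

Lemma real_neg (x : C) : x \is Num.real -> x != 0 -> (0 < x) = false -> x < 0.
Proof.
move=> xr nz; case: (real_ltgtP xr (real0 _)) => // /eqP; by rewrite (negbTE nz).
Qed.

Lemma neg_add (x y : C) : x < 0 -> y < 0 -> x + y < 0.
Proof. by move=> hx hy; rewrite -oppr_gt0 opprD addr_gt0 // oppr_gt0. Qed.

Lemma dot_lin k (g y1 y2 : 'I_k -> C) a b :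
  dot g (fun j => a * y1 j + b * y2 j) = a * dot g y1 + b * dot g y2.
Proof.
rewrite /dot !mulr_sumr -big_split /=; apply: eq_bigr => j _; ring.
Qed.

Lemma dot_proj k (g h y : 'I_k.+1 -> C) p : h p != 0 -> dot h y = 0 ->
  dot g y = dot (fun j => g (lift p j) - g p * h (lift p j) / h p) (fun j => y (lift p j)).
Proof.
move=> hp; rewrite /dot (bigD1_ord p) //= => H.
rewrite (bigD1_ord p) //=.
under [in RHS]eq_bigr => j _ do rewrite mulrBl.
rewrite sumrB /=.
have -> : \sum_(i < k) g p * h (lift p i) / h p * y (lift p i) =
  g p / h p * \sum_(i < k) h (lift p i) * y (lift p i).
  by rewrite mulr_sumr; apply: eq_bigr => i _; rewrite !mulrA [_ / h p]mulrAC.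
set A := \sum_(i < k) h (lift p i) * y (lift p i) in H *.
have -> : A = - (h p * y p) by apply/eqP; rewrite -addr_eq0 addrC H.
rewrite mulrN opprK mulrA mulfVK //; ring.
Qed.

Fixpoint cov (m k : nat) : nat :=
  match m with
  | 0 => 1
  | m'.+1 => match k with 0 => 0 | k'.+1 => (cov m' k + cov m' k')%N end
  end.

Lemma count_Sg m : forall k (c : 'I_m -> 'I_k -> C),
  (forall i j, c i j \is Num.real) -> (#|Sg c| <= cov m k)%N.
Proof.
elim: m => [|m IH] k c cr.
  by apply: leq_trans (max_card _) _; rewrite card_ffun card_ord card_bool.
have [[p cp]|c0] := pselect (exists p, c ord0 p != 0); last first.
  suff -> : Sg c = set0 by rewrite cards0.
  apply/setP => s; rewrite inE in_set0; apply/asboolP => -[y [_ h]].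
  have [] := h ord0; rewrite /dot big1 ?eqxx // => j _.
  case: (eqVneq (c ord0 j) 0) => [->|hj]; first by rewrite mul0r.
  by exfalso; apply: c0; exists j.
revert p cp; case: k c cr => [|k] c cr p cp; first by case: p cp.
have -> : cov m.+1 k.+1 = (cov m k.+1 + cov m k)%N by [].
pose c1 := fun i : 'I_m => c (lift ord0 i).
pose cK := fun (i : 'I_m) (j : 'I_k) => c1 i (lift p j) - c1 i p * c ord0 (lift p j) / c ord0 p.
have c1r : forall i j, c1 i j \is Num.real by move=> i j; apply: cr.
have cKr : forall i j, cK i j \is Num.real.
  move=> i j; rewrite /cK rpredB // ?rpredM ?rpredV //.
have r1 := IH _ c1 c1r.
have rK := IH _ cK cKr.
pose r := fun s : {ffun 'I_m.+1 -> bool} => ([ffun i : 'I_m => s (lift ord0 i)] : {ffun 'I_m -> bool}).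
pose S b := [set s in Sg c | s ord0 == b].
have inj b : {in S b &, injective r}.
  move=> s1 s2; rewrite !inE => /andP [_ /eqP h1] /andP [_ /eqP h2] e.
  apply/ffunP => i; case: (unliftP ord0 i) => [j ->|->]; last by rewrite h1 h2.
  by have := congr1 (fun f : {ffun 'I_m -> bool} => f j) e; rewrite /r !ffunE.
have sub1 b : r @: S b \subset Sg c1.
  apply/subsetP => t /imsetP [s]; rewrite !inE => /andP [/asboolP [y [yr hy]] _] ->.
  apply/asboolP; exists y; split => // i; rewrite ffunE; exact: hy.
have subK : r @: S true :&: r @: S false \subset Sg cK.
  apply/subsetP => t; rewrite inE => /andP [/imsetP [s1 + ->] /imsetP [s2 + e]].
  rewrite !inE => /andP [/asboolP [y1 [y1r hy1]] /eqP h1] /andP [/asboolP [y2 [y2r hy2]] /eqP h2].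
  have [n1 p1] := hy1 ord0; have [n2 p2] := hy2 ord0.
  rewrite h1 in p1; rewrite h2 in p2.
  have rd1 i y : (forall j, y j \is Num.real) -> dot (c i) y \is Num.real.
    by move=> yr; apply: dot_real => // j; apply: cr.
  have neg2 : dot (c ord0) y2 < 0 by apply: real_neg; [exact: rd1| exact: n2 | by rewrite -p2].
  pose a := - dot (c ord0) y2; pose b := dot (c ord0) y1.
  have a0 : 0 < a by rewrite oppr_gt0.
  have b0 : 0 < b by rewrite /b -p1.
  pose y := fun j => a * y1 j + b * y2 j.
  have yr : forall j, y j \is Num.real.
    move=> j; rewrite /y; apply: rpredD; apply: rpredM;
      [exact: gtr0_real|exact: y1r|exact: gtr0_real|exact: y2r].
  have hy0 : dot (c ord0) y = 0 by rewrite dot_lin /a /b; ring.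
  apply/asboolP; exists (fun j => y (lift p j)); split; first by move=> j; apply: yr.
  move=> i; rewrite -(dot_proj (c1 i) cp hy0).
  have [ni pi] := hy1 (lift ord0 i); have [ni2 pi2] := hy2 (lift ord0 i).
  have e2 : s1 (lift ord0 i) = s2 (lift ord0 i).
    by have := congr1 (fun f : {ffun 'I_m -> bool} => f i) e; rewrite /r !ffunE.
  rewrite /c1 dot_lin ffunE.
  case E : (s1 (lift ord0 i)).
    have q1 : 0 < dot (c (lift ord0 i)) y1 by rewrite -pi E.
    have q2 : 0 < dot (c (lift ord0 i)) y2 by rewrite -pi2 -e2 E.
    have : 0 < a * dot (c (lift ord0 i)) y1 + b * dot (c (lift ord0 i)) y2.
      by apply: addr_gt0; apply: mulr_gt0.
    by move=> q; rewrite q gt_eqF.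
  have q1 : dot (c (lift ord0 i)) y1 < 0 by apply: real_neg; [exact: rd1| exact: ni | by rewrite -pi E].
  have q2 : dot (c (lift ord0 i)) y2 < 0.
    by apply: real_neg; [exact: rd1| exact: ni2 | by rewrite -pi2 -e2 E].
  have : a * dot (c (lift ord0 i)) y1 + b * dot (c (lift ord0 i)) y2 < 0.
    by apply: neg_add; rewrite pmulr_rlt0.
  by move=> q; rewrite lt_gtF // lt_eqF.
have split : (#|Sg c| <= #|S true| + #|S false|)%N.
  rewrite -cardsUI; apply: leq_trans (leq_addr _ _); apply: subset_leq_card.
  apply/subsetP => s hs; rewrite !inE; move: hs; rewrite inE => ->; by case: (s ord0).
apply: leq_trans split _.
rewrite -(card_in_imset (inj true)) -(card_in_imset (inj false)) -cardsUI.
apply: leq_add; last exact: leq_trans (subset_leq_card subK) rK.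
apply: leq_trans r1; apply: subset_leq_card; rewrite subUset !sub1.
by [].
Qed.

End Count.

Lemma row_real (C : numClosedFieldType) n d (a : 'I_d -> 'I_n -> C) i j0 :
  a i j0 != 0 -> ~ imag_proj_full (linprod a) -> forall j, a i j / a i j0 \is Num.real.
Proof.
move=> h0 hI.
suff H : ~ exists j1, ~ (a i j1 / a i j0 \is Num.real).
  move=> j; case: (boolP (a i j / a i j0 \is Num.real)) => // hj.
  by exfalso; apply: H; exists j; apply/negP.
move=> [j1 hj1]; apply: hI => y yr.
pose b := fun j => a i j / a i j0.
have ne : j1 != j0 by apply/eqP => e; apply: hj1; rewrite e divff // real1.
pose s := \sum_j b j * ('i * y j).
pose be := b j1.
have gz : 'Im be != 0 by apply/eqP => /Creal_ImP.
pose X1 := - 'Im s / 'Im be.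
pose X0 := - 'Re s - 'Re be * X1.
pose x j := if j == j0 then X0 else if j == j1 then X1 else 0.
have xr j : x j \is Num.real.
  rewrite /x; case: ifP => _; last case: ifP => _.
  - have hX1 : X1 \is Num.real by rewrite /X1 realM // ?realN ?realV Creal_Im.
    by rewrite /X0 realB // ?realN ?Creal_Re // realM // Creal_Re.
  - by rewrite /X1 realM // ?realN ?realV Creal_Im.
  - exact: real0.
exists (fun j => x j + 'i * y j); split.
  rewrite /linprod; apply/eqP/prodf_eq0; exists i => //.
  have -> : \sum_j a i j * (x j + 'i * y j) = a i j0 * (\sum_j b j * x j + s).
    rewrite mulrDr /s !mulr_sumr -big_split /=; apply: eq_bigr => j _; rewrite /b.
    by field.
  have -> : \sum_j b j * x j = X0 + be * X1.
    rewrite (bigD1 j0) //= (bigD1 j1) /=; last by rewrite ne.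
    rewrite big1 => [|j /andP [hj1' hj0']].
      by rewrite /x eqxx (negbTE ne) eqxx /b divff // mul1r addr0.
    by rewrite /x (negbTE hj0') (negbTE hj1') mulr0.
  rewrite /X0 /X1.
  move: (Crect be) (Crect s) gz.
  set rb := 'Re be; set ib := 'Im be; set rs := 'Re s; set ims := 'Im s.
  move=> -> -> gz.
  rewrite mulf_eq0; apply/orP; right; apply/eqP.
  by field.
move=> j; rewrite raddfD /= ImMil.
have /Creal_ImP -> := xr j.
by have /Creal_ReP -> := yr j; rewrite add0r.
Qed.

Section Main.
Variables (C : numClosedFieldType) (n d : nat) (a : 'I_d -> 'I_n -> C) (j0 : 'I_d -> 'I_n).
Hypothesis h0 : forall i, a i (j0 i) != 0.
Hypothesis hr : forall i j, a i j / a i (j0 i) \is Num.real.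

Definition uu i j := a i j / a i (j0 i).

Lemma uu_real i j : uu i j \is Num.real. Proof. exact: hr. Qed.

Lemma lp_eq0 z : (linprod a z == 0) = [exists i, dot (uu i) z == 0].
Proof.
have fac i : \sum_j a i j * z j = a i (j0 i) * dot (uu i) z.
  rewrite /dot mulr_sumr; apply: eq_bigr => j _; rewrite /uu mulrA.
  by rewrite [a i (j0 i) * _]mulrC divfK.
apply/prodf_eq0/existsP.
  move=> -[i _]; rewrite fac mulf_eq0 (negbTE (h0 i)) /= => hi; by exists i.
by move=> -[i hi]; exists i => //; rewrite fac (eqP hi) mulr0.
Qed.

Lemma dot_shift k (c x e : 'I_k -> C) t :
  dot c (fun j => x j + t * e j) = dot c x + t * dot c e.
Proof. rewrite /dot mulr_sumr -big_split /=; apply: eq_bigr => j _; ring. Qed.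

Lemma sgn_div (A B : C) : A \is Num.real -> B \is Num.real -> B != 0 ->
  (- (A / B) < 0) = (A != 0) && ((0 < A) == (0 < B)).
Proof.
move=> Ar Br Bn; rewrite oppr_lt0.
case: (boolP (0 < B)) => Bpos.
  rewrite mulrC pmulr_rgt0 ?invr_gt0 //.
  case: (boolP (0 < A)) => Ap; first by rewrite gt_eqF // Ap.
  by rewrite andbF.
have Bneg : B < 0 by apply: real_neg => //; apply: negbTE.
rewrite mulrC nmulr_rgt0 ?invr_lt0 //.
case: (boolP (0 < A)) => Ap; first by rewrite lt_gtF // andbF.
case: (eqVneq A 0) => [->|An]; first by rewrite ltxx.
by rewrite (real_neg Ar An (negbTE Ap)).
Qed.

Lemma dot_uu_real k (c : 'I_k -> C) x : (forall j, c j \is Num.real) -> real_vec x ->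
  dot c x \is Num.real.
Proof. by move=> cr xr; apply: dot_real. Qed.

Lemma root_idx (x e : 'I_n -> C) t : linprod a (fun j => x j + t * e j) = 0 ->
  exists i, dot (uu i) x + t * dot (uu i) e = 0.
Proof.
move/eqP; rewrite lp_eq0 => /existsP [i /eqP hi]; exists i.
by rewrite -dot_shift.
Qed.

Lemma hyp_char e : hyperbolic (linprod a) e <-> real_vec e /\ forall i, dot (uu i) e != 0.
Proof.
split.
  move=> [er [fe _]]; split => // i; apply/negP => /eqP hi.
  by move: fe; rewrite lp_eq0 => /existsP; apply; exists i; rewrite hi.
move=> [er ne]; split => //; split.
  by rewrite lp_eq0; apply/existsP => -[i /eqP hi]; move: (ne i); rewrite hi eqxx.
move=> x xr t /root_idx [i hi].
have -> : t = - (dot (uu i) x / dot (uu i) e).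
  apply/eqP; rewrite -addr_eq0; apply/eqP; apply: (mulIf (ne i)).
  by rewrite mul0r mulrDl divfK ?ne // addrC hi.
rewrite realN; apply: realM; rewrite ?realV; apply: dot_uu_real => // j; exact: uu_real.
Qed.

Lemma hcone_char e x : real_vec e -> (forall i, dot (uu i) e != 0) ->
  hcone (linprod a) e x <->
  real_vec x /\ forall i, dot (uu i) x != 0 /\ (0 < dot (uu i) x) = (0 < dot (uu i) e).
Proof.
move=> er ne.
have dr y : real_vec y -> forall i, dot (uu i) y \is Num.real.
  by move=> yr i; apply: dot_uu_real => // j; exact: uu_real.
split.
  move=> [xr hc]; split => // i.
  have root : linprod a (fun j => x j + - (dot (uu i) x / dot (uu i) e) * e j) = 0.
    apply/eqP; rewrite lp_eq0; apply/existsP; exists i; rewrite dot_shift.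
    by rewrite mulNr divfK // subrr.
  have := hc _ root; rewrite sgn_div ?dr // => /andP [-> /eqP ->]; by split.
move=> [xr hx]; split => // t /root_idx [i hi].
have -> : t = - (dot (uu i) x / dot (uu i) e).
  apply/eqP; rewrite -addr_eq0; apply/eqP; apply: (mulIf (ne i)).
  by rewrite mul0r mulrDl divfK ?ne // addrC hi.
have [hn hs] := hx i.
by rewrite sgn_div ?dr // hn hs eqxx.
Qed.

Definition sgn (e : 'I_n -> C) : {ffun 'I_d -> bool} := [ffun i => 0 < dot (uu i) e].

Lemma cone_eq e e' : hyperbolic (linprod a) e -> hyperbolic (linprod a) e' ->
  (forall x, hcone (linprod a) e x <-> hcone (linprod a) e' x) <-> sgn e = sgn e'.
Proof.
move=> /hyp_char [er ne] /hyp_char [er' ne']; split.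
  move=> H; apply/ffunP => i; rewrite !ffunE.
  have : hcone (linprod a) e' e.
    by apply/H; apply/hcone_char => //; split => // k; split.
  by move/(hcone_char _ er' ne') => [_ /(_ i) [_ ->]].
move=> hs x; rewrite (hcone_char _ er ne) (hcone_char _ er' ne').
have hi i : (0 < dot (uu i) e) = (0 < dot (uu i) e').
  by have := congr1 (fun f : {ffun 'I_d -> bool} => f i) hs; rewrite !ffunE.
split => -[xr h]; split => // i; have [h1 h2] := h i; split => //; by rewrite h2 hi.
Qed.

Lemma hyp_exists : exists e, real_vec e /\ forall i, dot (uu i) e != 0.
Proof.
pose P i : {poly C} := \sum_(j < n) uu i j *: 'X^j.
have Pn i : P i != 0.
  apply/eqP => h; have := congr1 (fun p : {poly C} => p`_(j0 i)) h.
  rewrite coef0 coef_sum (bigD1 (j0 i)) //= coefZ coefXn eqxx mulr1 big1 => [|j hj].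
    by rewrite addr0 /uu divff ?h0 //; apply/eqP; rewrite oner_eq0.
  rewrite coefZ coefXn.
  have -> : ((j0 i : nat) == j) = false by apply/negbTE; rewrite eq_sym; exact: hj.
  by rewrite mulr0.
pose Q := \prod_i P i.
have Qn : Q != 0 by apply/prodf_neq0 => i _; exact: Pn.
pose rs := map (fun k : nat => k%:R : C) (iota 0 (size Q)).
have : ~~ all (root Q) rs.
  apply/negP => hall.
  have := max_poly_roots Qn hall.
  rewrite map_inj_uniq ?iota_uniq; last by move=> x y /eqP; rewrite eqr_nat => /eqP.
  by rewrite size_map size_iota ltnn => /(_ isT).
case/allPn => x /mapP [k _ ->] hk.
exists (fun j => k%:R ^+ j); split.
  by move=> j; apply: realX; exact: realn.
move=> i; move: hk; rewrite /root horner_prod => /prodf_neq0 /(_ i isT).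
rewrite /P horner_sum /dot.
by under eq_bigr do rewrite hornerZ hornerXn.
Qed.

End Main.

Lemma wit_list (T : eqType) (U : Type) (P : U -> T -> Prop) (x0 : U) (t0 : T) (s : seq T) :
  (forall t, t \in s -> exists e, P e t) ->
  exists L : seq U, size L = size s /\ forall i, (i < size s)%N -> P (nth x0 L i) (nth t0 s i).
Proof.
elim: s => [|t s IH] h; first by exists [::].
have [e he] := h t (mem_head _ _).
have [L [hL hP]] := IH (fun t' ht' => h t' (mem_behead (s:=t :: s) ht')).
exists (e :: L); split; first by rewrite /= hL.
by case=> [|i] //= hi; apply: hP.
Qed.

Lemma main_count (C : numClosedFieldType) n d (a : 'I_d -> 'I_n -> C) (j0 : 'I_d -> 'I_n)
  (h0 : forall i, a i (j0 i) != 0) (hr : forall i j, a i j / a i (j0 i) \is Num.real) :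
  exists N, hcone_count (linprod a) N /\ (0 < N)%N /\ (N <= cov d n)%N.
Proof.
pose S := [set s : {ffun 'I_d -> bool} |
  `[< exists e, hyperbolic (linprod a) e /\ sgn a j0 e = s >]].
have [L [hL hP]] := @wit_list _ _ (fun e s => hyperbolic (linprod a) e /\ sgn a j0 e = s)
  (fun _ => 0) [ffun=> false] (enum S)
  (fun t ht => ltac:(move: ht; rewrite mem_enum inE => /asboolP; exact)).
exists #|S|; split; [|split].
- exists L; split; first by rewrite hL cardE.
  split; first by move=> i hi; rewrite hL in hi; have [] := hP i hi.
  split.
    move=> i k hi hk ne H; rewrite hL in hi hk.
    have [hi1 si] := hP i hi; have [hk1 sk] := hP k hk.
    have := (cone_eq h0 hr hi1 hk1).1 H; rewrite si sk => /eqP.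
    by rewrite nth_uniq ?enum_uniq // => /eqP.
  move=> e he.
  have hs : sgn a j0 e \in enum S by rewrite mem_enum inE; apply/asboolP; exists e.
  have hi : (index (sgn a j0 e) (enum S) < size (enum S))%N by rewrite index_mem.
  exists (index (sgn a j0 e) (enum S)); rewrite hL; split => //.
  have [h1 s1] := hP _ hi.
  by apply/(cone_eq h0 hr he h1); rewrite s1 nth_index.
- have [e he] := hyp_exists h0.
  rewrite card_gt0; apply/set0Pn; exists (sgn a j0 e); rewrite inE; apply/asboolP.
  by exists e; split => //; apply/(hyp_char h0 hr).
apply: leq_trans (count_Sg (uu_real hr)).
apply: subset_leq_card; apply/subsetP => s; rewrite !inE => /asboolP [e [/(hyp_char h0 hr) [er ne] <-]].
by apply/asboolP; exists e; split => // i; rewrite ffunE; split.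
Qed.

Lemma cov_pow m k : (cov m k <= 2 ^ m)%N.
Proof.
elim: m k => [|m IH] [|k] //=.
rewrite expnS mul2n -addnn leq_add //.
Qed.

Lemma cov_sum m k : cov m.+1 k = (2 * \sum_(j < k) 'C(m, j))%N.
Proof.
elim: m k => [|m IH] [|k]; rewrite ?big_ord0 //.
  rewrite big_ord_recl /= big1 //=; case: k => //.
have -> : cov m.+2 k.+1 = (cov m.+1 k.+1 + cov m.+1 k)%N by [].
rewrite !IH big_ord_recl [in RHS]big_ord_recl /=.
under [in RHS]eq_bigr => i _ do rewrite binS.
rewrite big_split /=.
rewrite !bin0.
have -> : \sum_(i < k) 'C(m, bump 0 i) = \sum_(i < k) 'C(m, i.+1) by [].
lia.
Qed.

Theorem lemma3p1 (C : numClosedFieldType) (n d : nat) (a : 'I_d -> 'I_n -> C)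
  (hd : (1 <= d)%N) (hlin : forall i, exists j, a i j != 0)
  (hI : ~ imag_proj_full (linprod a)) :
  exists N : nat, hcone_count (linprod a) N /\ (0 < N)%N /\
    (if (d <= n)%N then (N <= 2 ^ d)%N
     else (N <= 2 * \sum_(k < n) 'C(d.-1, k))%N).
Proof.
have [j0 hj0] := fin_all_exists hlin.
have hr : forall i j, a i j / a i (j0 i) \is Num.real := fun i => row_real (hj0 i) hI.
have [N [hc [hN hb]]] := main_count hj0 hr.
exists N; split => //; split => //.
case: ifP => _; first exact: leq_trans hb (cov_pow _ _).
by move: hb; rewrite -(prednK hd) cov_sum.
Qed.
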